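(* Let $D$ be a transition diagram satisfying conditions (1)–(5) below. Then, for rows (and analogously for columns): (1) If two rows differ at two positions, then there is a short loop between these two rows. (2) If two rows differ at all three positions, then there are precisely two short loops between them. (3) If two rows coincide at two positions, then there is a short loop between each of these rows and the third row; in particular $D$ has at least two short loops. (4) If two rows coincide at all three positions, then there are precisely two short loops between each of these rows and the third row, and $D$ has precisely four short loops. The same statements hold with rows and columns interchanged.
   Context: A transition diagram is a relation $\to$ on cells $(i,j)$, $i,j\in\{1,2,3\}$, such that for every $j$ and $i\ne i'$ exactly one of $(i,j)\to(i',j)$, $(i',j)\to(i,j)$ holds (vertical arrows), for every $i$ and $j\ne j'$ exactly one of $(i,j)\to(i,j')$, $(i,j')\to(i,j)$ holds (horizontal arrows), and no other pairs are related. Conditions: (1) no row has horizontal arrows forming a directed 3-cycle and no column has vertical arrows forming a directed 3-cycle; (2) there are no $i\ne i'$ with $(i,j)\to(i',j)$ for all $j$, and no $j\ne j'$ with $(i,j)\to(i,j')$ for all $i$; (3) no cell all of whose four incident arrows point into it (no sink); (4) no cell all of whose four incident arrows point out of it (no source); (5) no alternating cycle, i.e. no sequence of cells $(i_0,j_0),\dots,(i_n,j_n)=(i_0,j_0)$, consecutive ones differing in exactly one coordinate, which follows the arrows on all vertical steps and goes against them on all horizontal steps, or vice versa. A short loop is a directed loop $(i,j)\to(i',j)\to(i',j')\to(i,j')\to(i,j)$ with $i\ne i'$, $j\ne j'$, lying between rows $i,i'$ and between columns $j,j'$. Two rows $i\ne i'$ coincide at the position between columns $j\ne j'$ if $(i,j)\to(i,j')$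 holds iff $(i',j)\to(i',j')$ holds, and differ there otherwise; there are three positions (the three pairs of columns). Analogously for two columns at positions given by pairs of rows. *)

(* Defs.v *)
From mathcomp Require Import all_boot.
Set Implicit Arguments. Unset Strict Implicit. Unset Printing Implicit Defensive.

(* A cell (i, j): row i, column j, with i, j in {1,2,3} represented as 'I_3. *)
Definition cell := ('I_3 * 'I_3)%type.

Section TD.
Variable arr : rel cell.

Definition vstep (c d : cell) : bool := (c.2 == d.2) && (c.1 != d.1).
Definition hstep (c d : cell) : bool := (c.1 == d.1) && (c.2 != d.2).
Definition adjacent (c d : cell) : bool := vstep c d || hstep c d.

Definition transition_diagram : Prop :=
  [/\ (forall (j i i' : 'I_3), i != i' -> arr (i, j) (i', j) != arr (i', j) (i, j)),
      (forall (i j j' : 'I_3), j != j' -> arr (i, j) (i, j') != arr (i, j') (i, j))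
    & (forall c d : cell, arr c d -> adjacent c d)].

Definition cond1 : Prop :=
  (forall (i j1 j2 j3 : 'I_3),
      ~ [&& arr (i, j1) (i, j2), arr (i, j2) (i, j3) & arr (i, j3) (i, j1)]) /\
  (forall (j i1 i2 i3 : 'I_3),
      ~ [&& arr (i1, j) (i2, j), arr (i2, j) (i3, j) & arr (i3, j) (i1, j)]).

Definition cond2 : Prop :=
  (forall (i i' : 'I_3), i != i' -> ~ (forall j : 'I_3, arr (i, j) (i', j))) /\
  (forall (j j' : 'I_3), j != j' -> ~ (forall i : 'I_3, arr (i, j) (i, j'))).

Definition cond3 : Prop :=
  forall c : cell, ~ (forall d : cell, adjacent c d -> arr d c).

Definition cond4 : Prop :=
  forall c : cell, ~ (forall d : cell, adjacent c d -> arr c d).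

Definition alt_step1 (c d : cell) : bool :=
  (vstep c d && arr c d) || (hstep c d && arr d c).
Definition alt_step2 (c d : cell) : bool :=
  (vstep c d && arr d c) || (hstep c d && arr c d).

Definition cond5 : Prop :=
  forall (c0 : cell) (p : seq cell), p != [::] -> last c0 p = c0 ->
    ~ path alt_step1 c0 p /\ ~ path alt_step2 c0 p.

Definition short_loop_at (i i' j j' : 'I_3) : bool :=
  [&& i != i', j != j', arr (i, j) (i', j), arr (i', j) (i', j'),
      arr (i', j') (i, j') & arr (i, j') (i, j)].

(* a short loop, identified with its set of four cells (the cyclic orientation
   is then determined by arr) *)
Definition short_loops : {set {set cell}} :=
  [set S : {set cell} | [exists i : 'I_3, exists i' : 'I_3, exists j : 'I_3,
     exists j' : 'I_3, short_loop_at i i' j j' &&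
       (S == [set (i, j); (i', j); (i', j'); (i, j')])]].

Definition loops_between_rows (i i' : 'I_3) : {set {set cell}} :=
  [set S in short_loops | [forall c in S, (c.1 == i) || (c.1 == i')]].
Definition loops_between_cols (j j' : 'I_3) : {set {set cell}} :=
  [set S in short_loops | [forall c in S, (c.2 == j) || (c.2 == j')]].

Definition rows_coincide (i i' j j' : 'I_3) : bool :=
  arr (i, j) (i, j') == arr (i', j) (i', j').
Definition cols_coincide (j j' i i' : 'I_3) : bool :=
  arr (i, j) (i', j) == arr (i, j') (i', j').

(* positions = unordered pairs of distinct indices, encoded as (a, b) with a < b *)
Definition positions : {set 'I_3 * 'I_3} := [set p : 'I_3 * 'I_3 | (p.1 < p.2)%N].

Definition n_rows_differ (i i' : 'I_3) : nat :=
  #|[set p in positions | ~~ rows_coincide i i' p.1 p.2]|.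
Definition n_rows_coincide (i i' : 'I_3) : nat :=
  #|[set p in positions | rows_coincide i i' p.1 p.2]|.
Definition n_cols_differ (j j' : 'I_3) : nat :=
  #|[set p in positions | ~~ cols_coincide j j' p.1 p.2]|.
Definition n_cols_coincide (j j' : 'I_3) : nat :=
  #|[set p in positions | cols_coincide j j' p.1 p.2]|.

End TD.

(* Main.v *)
Require Import Defs.
From mathcomp Require Import all_boot.
From Stdlib Require Import FunctionalExtensionality.
Set Implicit Arguments. Unset Strict Implicit. Unset Printing Implicit Defensive.

Notation "a &&& b" := (if a then b else false) (at level 57, right associativity).
Notation "a ||| b" := (if a then true else b) (at level 58, right associativity).
Notation "a ==>> b" := (if a then b else true) (at level 59, right associativity).

Definition o0 : 'I_3 := @Ordinal 3 0 isT.
Definition o1 : 'I_3 := @Ordinal 3 1 isT.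
Definition o2 : 'I_3 := @Ordinal 3 2 isT.

Definition all3 (P : 'I_3 -> bool) : bool := P o0 &&& (P o1 &&& P o2).

Lemma all3P (P : 'I_3 -> bool) : reflect (forall i, P i) (all3 P).
Proof.
apply: (iffP (@and3P (P o0) (P o1) (P o2))) => [[p0 p1 p2] [[|[|[|m]]] Hm] //|H]; last by split; apply: H.
- by have -> : Ordinal Hm = o0 by apply: val_inj.
- by have -> : Ordinal Hm = o1 by apply: val_inj.
- by have -> : Ordinal Hm = o2 by apply: val_inj.
Qed.

Definition eqO (i j : 'I_3) : bool := eqn i j.
Lemma eqOE i j : eqO i j = (i == j). Proof. by []. Qed.
Definition eqC (c d : cell) : bool := eqO c.1 d.1 &&& eqO c.2 d.2.
Lemma eqCE c d : eqC c d = (c == d). Proof. by []. Qed.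

Definition allC (P : cell -> bool) : bool := all3 (fun i => all3 (fun j => P (i, j))).
Lemma allCP (P : cell -> bool) : reflect (forall c, P c) (allC P).
Proof.
apply: (iffP (all3P _)) => [H [i j]|H i]; first by move/all3P: (H i).
by apply/all3P => j.
Qed.

Definition cells : seq cell := [seq (i, j) | i <- [:: o0; o1; o2], j <- [:: o0; o1; o2]].

Definition mk (s : seq bool) : rel cell := fun c d =>
  if eqO c.1 d.1 &&& ~~ eqO c.2 d.2 then
    (if (c.2 < d.2)%N then nth false s (3 * c.1 + c.2 + d.2 - 1)
     else ~~ nth false s (3 * c.1 + d.2 + c.2 - 1))
  else if eqO c.2 d.2 &&& ~~ eqO c.1 d.1 then
    (if (c.1 < d.1)%N then nth false s (9 + 3 * c.2 + c.1 + d.1 - 1)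
     else ~~ nth false s (9 + 3 * c.2 + d.1 + c.1 - 1))
  else false.

Definition ofn (k : nat) : 'I_3 := match k with 0 => o0 | 1 => o1 | _ => o2 end.
Definition pr1 (r : nat) : nat := if r == 2 then 1 else 0.
Definition pr2 (r : nat) : nat := if r == 0 then 1 else 2.
Definition cA (k : nat) : cell :=
  if (k < 9)%N then (ofn (k %/ 3), ofn (pr1 (k %% 3)))
  else (ofn (pr1 ((k - 9) %% 3)), ofn ((k - 9) %/ 3)).
Definition cB (k : nat) : cell :=
  if (k < 9)%N then (ofn (k %/ 3), ofn (pr2 (k %% 3)))
  else (ofn (pr2 ((k - 9) %% 3)), ofn ((k - 9) %/ 3)).

Lemma decH (i j j' : 'I_3) : (j < j')%N ->
  [&& (3 * i + j + j' - 1 < 18)%N, cA (3 * i + j + j' - 1) == (i, j)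
    & cB (3 * i + j + j' - 1) == (i, j')].
Proof.
move: i j j'.
have H : all3 (fun i => all3 (fun j => all3 (fun j' => (j < j')%N ==>
  [&& (3 * i + j + j' - 1 < 18)%N, cA (3 * i + j + j' - 1) == (i, j)
    & cB (3 * i + j + j' - 1) == (i, j')]))) by vm_compute.
move=> i j j'; move/all3P: H => /(_ i) /all3P /(_ j) /all3P /(_ j') /implyP; exact.
Qed.

Lemma decV (j i i' : 'I_3) : (i < i')%N ->
  [&& (9 + 3 * j + i + i' - 1 < 18)%N, cA (9 + 3 * j + i + i' - 1) == (i, j)
    & cB (9 + 3 * j + i + i' - 1) == (i', j)].
Proof.
move: j i i'.
have H : all3 (fun j => all3 (fun i => all3 (fun i' => (i < i')%N ==>
  [&& (9 + 3 * j + i + i' - 1 < 18)%N, cA (9 + 3 * j + i + i' - 1) == (i, j)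
    & cB (9 + 3 * j + i + i' - 1) == (i', j)]))) by vm_compute.
move=> j i i'; move/all3P: H => /(_ j) /all3P /(_ i) /all3P /(_ i') /implyP; exact.
Qed.

Definition sOf (arr : rel cell) : seq bool := mkseq (fun k => arr (cA k) (cB k)) 18.

Arguments sOf : simpl never.

Lemma neq_lt (m n : nat) : m != n -> ~~ (m < n)%N -> (n < m)%N.
Proof. by rewrite neq_ltn => /orP[->|]. Qed.

Lemma arr_mk (arr : rel cell) (s : seq bool) : transition_diagram arr ->
  (forall k, (k < 18)%N -> nth false s k = arr (cA k) (cB k)) ->
  forall c d, arr c d = mk s c d.
Proof.
move=> [t1 t2 t3] hs [i j] [i' j']; rewrite /mk /=.
case: (boolP (eqO i i' &&& ~~ eqO j j')) => [/andP[]|hn].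
  rewrite !eqOE => /eqP <- jj.
  case: (ltnP j j') => hjj.
    case/and3P: (decH i hjj) => hk /eqP e1 /eqP e2.
    by rewrite hs // e1 e2.
  have hjj' : (j' < j)%N by apply: neq_lt => //; rewrite -ltnNge.
  case/and3P: (decH i hjj') => hk /eqP e1 /eqP e2.
  rewrite hs // e1 e2.
  by move: (t2 i j j' jj); case: (arr (i, j) (i, j')); case: (arr (i, j') (i, j)).
case: (boolP (eqO j j' &&& ~~ eqO i i')) => [/andP[]|hn'].
  rewrite !eqOE => /eqP <- ii.
  case: (ltnP i i') => hii.
    case/and3P: (decV j hii) => hk /eqP e1 /eqP e2.
    by rewrite hs // e1 e2.
  have hii' : (i' < i)%N by apply: neq_lt => //; rewrite -ltnNge.
  case/and3P: (decV j hii') => hk /eqP e1 /eqP e2.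
  rewrite hs // e1 e2.
  by move: (t1 j i i' ii); case: (arr (i, j) (i', j)); case: (arr (i', j) (i, j)).
apply/negbTE/negP => /t3; move: hn hn'; rewrite /adjacent /vstep /hstep /= -!eqOE.
by case: (eqO i i'); case: (eqO j j').
Qed.

Definition c1b (a : rel cell) : bool :=
  all3 (fun i => all3 (fun j1 => all3 (fun j2 => all3 (fun j3 =>
     ~~ (a (i, j1) (i, j2) &&& (a (i, j2) (i, j3) &&& a (i, j3) (i, j1))))))) &&&
  all3 (fun j => all3 (fun i1 => all3 (fun i2 => all3 (fun i3 =>
     ~~ (a (i1, j) (i2, j) &&& (a (i2, j) (i3, j) &&& a (i3, j) (i1, j))))))).
Definition c2b (a : rel cell) : bool :=
  all3 (fun i => all3 (fun i' => ~~ eqO i i' ==>> ~~ all3 (fun j => a (i, j) (i', j)))) &&&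
  all3 (fun j => all3 (fun j' => ~~ eqO j j' ==>> ~~ all3 (fun i => a (i, j) (i, j')))).
Definition adjF (c d : cell) : bool :=
  (eqO c.2 d.2 &&& ~~ eqO c.1 d.1) ||| (eqO c.1 d.1 &&& ~~ eqO c.2 d.2).
Definition c34b (a : rel cell) : bool :=
  allC (fun c => ~~ allC (fun d => adjF c d ==>> a d c)) &&&
  allC (fun c => ~~ allC (fun d => adjF c d ==>> a c d)).
Definition altF (a : rel cell) (c d : cell) : bool :=
  ((eqO c.2 d.2 &&& ~~ eqO c.1 d.1) &&& a c d) ||| ((eqO c.1 d.1 &&& ~~ eqO c.2 d.2) &&& a d c).
Lemma altFE a : altF a = alt_step1 a. Proof. by []. Qed.
Fixpoint memF (x : cell) (s : seq cell) : bool :=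
  if s is y :: s' then eqC x y ||| memF x s' else false.
Lemma memFP x s : memF x s -> x \in s.
Proof.
elim: s => //= y s IH; rewrite inE -eqCE.
by case: (eqC x y) => // /IH ->; rewrite orbT.
Qed.

Fixpoint hasF (p : cell -> bool) (s : seq cell) : bool :=
  if s is x :: s' then p x ||| hasF p s' else false.
Lemma hasFP p s : hasF p s -> exists2 x, x \in s & p x.
Proof.
elim: s => //= x s IH; case: ifP => [px _|_ /IH [y hy py]].
  by exists x; rewrite ?inE ?eqxx.
by exists y; rewrite // inE hy orbT.
Qed.

Fixpoint reach (e : rel cell) (n : nat) (S : seq cell) : seq cell :=
  if n is n'.+1 then
    let R := reach e n' S in R ++ [seq y <- cells | ~~ memF y R &&& hasF (fun x => e x y) R]
  else S.

Lemma reachS e n S : reach e n.+1 S =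
  reach e n S ++ [seq y <- cells | ~~ memF y (reach e n S) &&& hasF (fun x => e x y) (reach e n S)].
Proof. by []. Qed.

Lemma reachP e n S y : y \in reach e n S ->
  exists d, d \in S /\ exists p, path e d p /\ last d p = y.
Proof.
elim: n y => [|n IH] y; first by move=> hy; exists y; split => //; exists [::].
rewrite reachS mem_cat => /orP[/IH //|]; rewrite mem_filter => /andP[hh _].
move: hh; case: (memF y _) => //= /hasFP[x /IH[d [hd [p [hp hl]]]] hxy].
exists d; split => //; exists (rcons p y); by rewrite rcons_path hp hl hxy last_rcons.
Qed.

Definition cycb (e : rel cell) : bool :=
  hasF (fun c => memF c (reach e 8 [seq d <- cells | e c d])) cells.

Lemma cycb_cycle e : cycb e -> exists c p, [/\ p != [::], last c p = c & path e c p].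
Proof.
rewrite /cycb => /hasFP [c _ hm].
have [d [hd [p [hp hl]]]] := reachP (memFP hm).
move: hd; rewrite mem_filter => /andP[hcd _].
by exists c, (d :: p); split => //=; rewrite hcd.
Qed.

Definition posl : seq ('I_3 * 'I_3) := [:: (o0, o1); (o0, o2); (o1, o2)].
Definition quad := (('I_3 * 'I_3) * ('I_3 * 'I_3))%type.
Definition quadl : seq quad := [seq (q, p) | q <- posl, p <- posl].

Definition isloop (a : rel cell) (x : quad) : bool :=
  let: ((i, i'), (j, j')) := x in
  [|| short_loop_at a i i' j j', short_loop_at a i' i j j',
      short_loop_at a i i' j' j | short_loop_at a i' i j' j].
Definition oq (i i' : 'I_3) : 'I_3 * 'I_3 := if (i < i')%N then (i, i') else (i', i).

Definition lr a i i' := count (fun x => isloop a x && (x.1 == oq i i')) quadl.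
Definition lc a j j' := count (fun x => isloop a x && (x.2 == oq j j')) quadl.
Definition ls a := count (isloop a) quadl.
Definition nrd a i i' := count (fun p => ~~ rows_coincide a i i' p.1 p.2) posl.
Definition nrc a i i' := count (fun p => rows_coincide a i i' p.1 p.2) posl.
Definition ncd a j j' := count (fun p => ~~ cols_coincide a j j' p.1 p.2) posl.
Definition ncc a j j' := count (fun p => cols_coincide a j j' p.1 p.2) posl.

Definition concB (a : rel cell) : bool :=
  all3 (fun i => all3 (fun i' => (i != i') ==> [&&
     (1 < nrd a i i') ==> (0 < lr a i i'),
     (nrd a i i' == 3) ==> (lr a i i' == 2) &
     all3 (fun k => (k != i) ==> (k != i') ==> (
       ((1 < nrc a i i') ==> [&& 0 < lr a i k, 0 < lr a i' k & 1 < ls a]) &&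
       ((nrc a i i' == 3) ==> [&& lr a i k == 2, lr a i' k == 2 & ls a == 4])))])) &&
  all3 (fun j => all3 (fun j' => (j != j') ==> [&&
     (1 < ncd a j j') ==> (0 < lc a j j'),
     (ncd a j j' == 3) ==> (lc a j j' == 2) &
     all3 (fun k => (k != j) ==> (k != j') ==> (
       ((1 < ncc a j j') ==> [&& 0 < lc a j k, 0 < lc a j' k & 1 < ls a]) &&
       ((ncc a j j' == 3) ==> [&& lc a j k == 2, lc a j' k == 2 & ls a == 4])))])).

Definition slatF (a : rel cell) (i i' j j' : 'I_3) : bool :=
  ~~ eqO i i' &&& (~~ eqO j j' &&& (a (i, j) (i', j) &&& (a (i', j) (i', j') &&&
      (a (i', j') (i, j') &&& a (i, j') (i, j))))).
Definition isloopF (a : rel cell) (x : quad) : bool :=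
  let: ((i, i'), (j, j')) := x in
  slatF a i i' j j' ||| (slatF a i' i j j' ||| (slatF a i i' j' j ||| slatF a i' i j' j)).
Definition eqP2 (p q : 'I_3 * 'I_3) : bool := eqO p.1 q.1 &&& eqO p.2 q.2.
Definition lrF a i i' := count (fun x => isloopF a x &&& eqP2 x.1 (oq i i')) quadl.
Definition lcF a j j' := count (fun x => isloopF a x &&& eqP2 x.2 (oq j j')) quadl.
Definition lsF a := count (isloopF a) quadl.

Definition concBF (a : rel cell) : bool :=
  all3 (fun i => all3 (fun i' => ~~ eqO i i' ==>> (
     ((1 < nrd a i i') ==>> (0 < lrF a i i')) &&&
     (((nrd a i i' == 3) ==>> (lrF a i i' == 2)) &&&
     all3 (fun k => ~~ eqO k i ==>> (~~ eqO k i' ==>> (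
       ((1 < nrc a i i') ==>> ((0 < lrF a i k) &&& ((0 < lrF a i' k) &&& (1 < lsF a)))) &&&
       ((nrc a i i' == 3) ==>> ((lrF a i k == 2) &&& ((lrF a i' k == 2) &&& (lsF a == 4))))))))))) &&&
  all3 (fun j => all3 (fun j' => ~~ eqO j j' ==>> (
     ((1 < ncd a j j') ==>> (0 < lcF a j j')) &&&
     (((ncd a j j' == 3) ==>> (lcF a j j' == 2)) &&&
     all3 (fun k => ~~ eqO k j ==>> (~~ eqO k j' ==>> (
       ((1 < ncc a j j') ==>> ((0 < lcF a j k) &&& ((0 < lcF a j' k) &&& (1 < lsF a)))) &&&
       ((ncc a j j' == 3) ==>> ((lcF a j k == 2) &&& ((lcF a j' k == 2) &&& (lsF a == 4))))))))))).

Lemma concBFE a : concBF a = concB a. Proof. reflexivity. Qed.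

Definition checkA (a : rel cell) : bool :=
  if c2b a then if c34b a then if cycb (altF a) then true
  else concBF a else true else true.
Definition checkS (s : seq bool) : bool := checkA (mk s).

Definition tripgood (b0 b1 b2 : bool) : bool :=
  ~~ ((b0 && ~~ b1 && b2) || (~~ b0 && b1 && ~~ b2)).
Fixpoint tripok (s : seq bool) : bool :=
  if s is b0 :: b1 :: b2 :: s' then tripgood b0 b1 b2 && tripok s' else true.
Definition trip : seq (seq bool) :=
  [:: [:: true; true; true]; [:: true; true; false]; [:: true; false; false];
      [:: false; true; true]; [:: false; false; true]; [:: false; false; false]].

Fixpoint allT (n : nat) (P : seq bool -> bool) : bool :=
  if n is n'.+1 then all (fun t => allT n' (fun s => P (t ++ s))) trip
  else P [::].

Lemma tripokS b0 b1 b2 s : tripok [:: b0, b1, b2 & s] = tripgood b0 b1 b2 && tripok s.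
Proof. by []. Qed.

Lemma allTS n P : allT n.+1 P = all (fun t => allT n (fun s => P (t ++ s))) trip.
Proof. by []. Qed.

Lemma allTP n P : allT n P -> forall s, size s = 3 * n -> tripok s -> P s.
Proof.
elim: n P => [|n IH] P; first by move=> H [|//].
rewrite allTS => /allP H [|b0 [|b1 [|b2 s]]]; rewrite mulnS !addSn // => -[hs].
rewrite tripokS => /andP[hg ht].
have hm : [:: b0; b1; b2] \in trip by move: hg; case: b0; case: b1; case: b2.
exact: (IH _ (H _ hm) s hs ht).
Qed.

Lemma check_all : allT 6 checkS.
Proof. vm_cast_no_check (erefl true). Qed.

Lemma posl_mem (p : 'I_3 * 'I_3) : (p \in posl) = (p.1 < p.2)%N.
Proof.
have H : all3 (fun i => all3 (fun j => ((i, j) \in posl) == (i < j)%N)) by vm_compute.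
case: p => i j; move/all3P: H => /(_ i) /all3P /(_ j) /eqP //.
Qed.

Lemma quadl_mem (x : quad) : (x \in quadl) = (x.1.1 < x.1.2)%N && (x.2.1 < x.2.2)%N.
Proof.
have H : all3 (fun i => all3 (fun i' => all3 (fun j => all3 (fun j' =>
  (((i, i'), (j, j')) \in quadl) == (i < i')%N && (j < j')%N)))) by vm_compute.
case: x => [[i i'] [j j']].
by move/all3P: H => /(_ i) /all3P /(_ i') /all3P /(_ j) /all3P /(_ j') /eqP.
Qed.

Lemma posl_uniq : uniq posl. Proof. by []. Qed.
Lemma quadl_uniq : uniq quadl. Proof. by []. Qed.

Definition rect (i i' j j' : 'I_3) : {set cell} := [set (i, j); (i', j); (i', j'); (i, j')].
Definition fq (x : quad) : {set cell} := rect x.1.1 x.1.2 x.2.1 x.2.2.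

Lemma mem_rect (i i' j j' : 'I_3) (z : cell) :
  (z \in rect i i' j j') = ((z.1 == i) || (z.1 == i')) && ((z.2 == j) || (z.2 == j')).
Proof.
case: z => a b; rewrite /rect !inE !xpair_eqE /=.
by case: (a == i); case: (a == i'); case: (b == j); case: (b == j').
Qed.

Lemma rect_swap1 i i' j j' : rect i' i j j' = rect i i' j j'.
Proof. by apply/setP => z; rewrite !mem_rect (orbC (z.1 == i')). Qed.
Lemma rect_swap2 i i' j j' : rect i i' j' j = rect i i' j j'.
Proof. by apply/setP => z; rewrite !mem_rect (orbC (z.2 == j')). Qed.

Lemma oq_facts (i i' : 'I_3) : i != i' ->
  ((oq i i').1 < (oq i i').2)%N /\
  ((oq i i' = (i, i')) \/ (oq i i' = (i', i))).
Proof.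
rewrite /oq; case: (ltnP i i') => h hne /=; first by split => //; left.
split; last by right.
by rewrite ltn_neqAle h andbT eq_sym.
Qed.

Lemma slat_neq a i i' j j' : short_loop_at a i i' j j' -> i != i' /\ j != j'.
Proof. by case/and3P. Qed.

Lemma isloop_oq a i i' j j' : short_loop_at a i i' j j' -> isloop a (oq i i', oq j j').
Proof.
move=> h; rewrite /oq; case: (ltnP i i') => _; case: (ltnP j j') => _ /=; by rewrite h ?orbT.
Qed.

Lemma rect_oq i i' j j' : fq (oq i i', oq j j') = rect i i' j j'.
Proof.
rewrite /fq /oq; case: (ltnP i i') => _; case: (ltnP j j') => _ /=.
all: first [ by [] | exact: rect_swap1 | exact: rect_swap2 | by rewrite rect_swap1 rect_swap2 ].
Qed.

Lemma G1 a : short_loops a = fq @: [seq x <- quadl | isloop a x].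
Proof.
apply/setP => S; rewrite inE; apply/idP/idP.
  case/existsP=> i /existsP[i' /existsP[j /existsP[j' /andP[hl /eqP ->]]]].
  have [hii hjj] := slat_neq hl.
  apply/imsetP; exists (oq i i', oq j j'); last by rewrite rect_oq.
  rewrite mem_filter isloop_oq // quadl_mem /=.
  by rewrite (proj1 (oq_facts hii)) (proj1 (oq_facts hjj)).
case/imsetP => [[[i i'] [j j']]]; rewrite mem_filter => /andP[hl hx] ->.
case/or4P: hl => h.
- apply/existsP; exists i; apply/existsP; exists i'; apply/existsP; exists j;
  apply/existsP; exists j'; rewrite h /=; apply/eqP.
  by change (rect i i' j j' = rect i i' j j').
- apply/existsP; exists i'; apply/existsP; exists i; apply/existsP; exists j;
  apply/existsP; exists j'; rewrite h /=; apply/eqP.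
  by change (rect i i' j j' = rect i' i j j'); rewrite rect_swap1.
- apply/existsP; exists i; apply/existsP; exists i'; apply/existsP; exists j';
  apply/existsP; exists j; rewrite h /=; apply/eqP.
  by change (rect i i' j j' = rect i i' j' j); rewrite rect_swap2.
- apply/existsP; exists i'; apply/existsP; exists i; apply/existsP; exists j';
  apply/existsP; exists j; rewrite h /=; apply/eqP.
  by change (rect i i' j j' = rect i' i j' j); rewrite rect_swap1 rect_swap2.
Qed.

Lemma pairfact (u v u' v' : 'I_3) : (u < v)%N -> (u' < v')%N ->
  (u == u') || (u == v') -> (v == u') || (v == v') -> (u, v) = (u', v').
Proof.
move: u v u' v'.
have H : all3 (fun u => all3 (fun v => all3 (fun u' => all3 (fun v' =>
  (u < v)%N ==> (u' < v')%N ==> ((u == u') || (u == v')) ==> ((v == u') || (v == v')) ==>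
  ((u, v) == (u', v')))))) by vm_compute.
move=> u v u' v' h1 h2 h3 h4; apply/eqP.
move/all3P: H => /(_ u) /all3P /(_ v) /all3P /(_ u') /all3P /(_ v').
by rewrite h1 h2 h3 h4.
Qed.

Lemma oqfact (u v i i' : 'I_3) : (u < v)%N -> i != i' ->
  (u == i) || (u == i') -> (v == i) || (v == i') -> (u, v) = oq i i'.
Proof.
move: u v i i'.
have H : all3 (fun u => all3 (fun v => all3 (fun i => all3 (fun i' =>
  (u < v)%N ==> (i != i') ==> ((u == i) || (u == i')) ==> ((v == i) || (v == i')) ==>
  ((u, v) == oq i i'))))) by vm_compute.
move=> u v i i' h1 h2 h3 h4; apply/eqP.
move/all3P: H => /(_ u) /all3P /(_ v) /all3P /(_ i) /all3P /(_ i').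
by rewrite h1 h2 h3 h4.
Qed.

Lemma fq_inj x y : x \in quadl -> y \in quadl -> fq x = fq y -> x = y.
Proof.
case: x => [[u v] [w z]]; case: y => [[u' v'] [w' z']].
rewrite !quadl_mem /= => /andP[huv hwz] /andP[huv' hwz'] /setP E.
move: (E (u, w)) (E (v, z)); rewrite /fq !mem_rect /= !eqxx /= ?orTb ?orbT /=.
move=> /esym/andP[hu hw] /esym/andP[hv hz].
by rewrite (pairfact huv huv' hu hv) (pairfact hwz hwz' hw hz).
Qed.

Lemma card_fq (P : pred quad) : #|fq @: [seq x <- quadl | P x]| = count P quadl.
Proof.
rewrite card_in_imset; last first.
  by move=> x y; rewrite !mem_filter => /andP[_ hx] /andP[_ hy]; exact: fq_inj.
rewrite -size_filter; apply/card_uniqP; exact: filter_uniq quadl_uniq.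
Qed.

Lemma card_pos (P : pred ('I_3 * 'I_3)) :
  #|[set p in positions | P p]| = count P posl.
Proof.
rewrite -size_filter; have /card_uniqP <- := filter_uniq P posl_uniq.
apply: eq_card => p; rewrite mem_filter posl_mem !inE andbC.
by [].
Qed.

Lemma G2 a (i i' : 'I_3) : i != i' ->
  loops_between_rows a i i' = fq @: [seq x <- quadl | isloop a x && (x.1 == oq i i')].
Proof.
move=> hii; apply/setP => S; rewrite /loops_between_rows inE G1; apply/andP/imsetP.
  case=> /imsetP[x]; rewrite mem_filter => /andP[hl hx] -> /forall_inP Hc.
  exists x => //; rewrite mem_filter hl hx andbT /=.
  move: hx Hc; case: x {hl} => [[u v] [w z]]; rewrite quadl_mem /= => /andP[huv _] Hc.
  have := Hc (u, w); have := Hc (v, z); rewrite /fq !mem_rect /= !eqxx /= ?orTb ?orbT /= => hv hu.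
  by apply/eqP; apply: oqfact => //; [apply: hu | apply: hv].
case=> x; rewrite mem_filter => /andP[/andP[hl /eqP hq] hx] ->; split.
  by apply/imsetP; exists x => //; rewrite mem_filter hl hx.
apply/forall_inP => c; move: hq; case: x {hl hx} => [[u v] [w z]] /= hq.
rewrite /fq mem_rect /= => /andP[h1 _].
have [_ [ho|ho]] := oq_facts hii; rewrite ho in hq; case: hq => -> ->  in h1 *; first by [].
by rewrite orbC.
Qed.

Lemma G3 a (j j' : 'I_3) : j != j' ->
  loops_between_cols a j j' = fq @: [seq x <- quadl | isloop a x && (x.2 == oq j j')].
Proof.
move=> hjj; apply/setP => S; rewrite /loops_between_cols inE G1; apply/andP/imsetP.
  case=> /imsetP[x]; rewrite mem_filter => /andP[hl hx] -> /forall_inP Hc.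
  exists x => //; rewrite mem_filter hl hx andbT /=.
  move: hx Hc; case: x {hl} => [[u v] [w z]]; rewrite quadl_mem /= => /andP[_ hwz] Hc.
  have := Hc (u, w); have := Hc (v, z); rewrite /fq !mem_rect /= !eqxx /= ?orTb ?orbT /= => hv hu.
  by apply/eqP; apply: oqfact => //; [apply: hu | apply: hv].
case=> x; rewrite mem_filter => /andP[/andP[hl /eqP hq] hx] ->; split.
  by apply/imsetP; exists x => //; rewrite mem_filter hl hx.
apply/forall_inP => c; move: hq; case: x {hl hx} => [[u v] [w z]] /= hq.
rewrite /fq mem_rect /= => /andP[_ h1].
have [_ [ho|ho]] := oq_facts hjj; rewrite ho in hq; case: hq => -> ->  in h1 *; first by [].
by rewrite orbC.
Qed.

Lemma LRcard a i i' : i != i' -> #|loops_between_rows a i i'| = lr a i i'.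
Proof. by move=> h; rewrite G2 // card_fq. Qed.
Lemma LCcard a j j' : j != j' -> #|loops_between_cols a j j'| = lc a j j'.
Proof. by move=> h; rewrite G3 // card_fq. Qed.
Lemma SLcard a : #|short_loops a| = ls a.
Proof. by rewrite G1 card_fq. Qed.

Lemma concl_of (arr : rel cell) : concB arr ->
  (forall i i' : 'I_3, i != i' ->
     (2 <= n_rows_differ arr i i' -> loops_between_rows arr i i' != set0) /\
     (n_rows_differ arr i i' = 3 -> #|loops_between_rows arr i i'| = 2) /\
     (forall k : 'I_3, k != i -> k != i' ->
        (2 <= n_rows_coincide arr i i' ->
           [/\ loops_between_rows arr i k != set0,
               loops_between_rows arr i' k != set0
             & 2 <= #|short_loops arr|]) /\
        (n_rows_coincide arr i i' = 3 ->
           [/\ #|loops_between_rows arr i k| = 2,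
               #|loops_between_rows arr i' k| = 2
             & #|short_loops arr| = 4]))) /\
  (forall j j' : 'I_3, j != j' ->
     (2 <= n_cols_differ arr j j' -> loops_between_cols arr j j' != set0) /\
     (n_cols_differ arr j j' = 3 -> #|loops_between_cols arr j j'| = 2) /\
     (forall k : 'I_3, k != j -> k != j' ->
        (2 <= n_cols_coincide arr j j' ->
           [/\ loops_between_cols arr j k != set0,
               loops_between_cols arr j' k != set0
             & 2 <= #|short_loops arr|]) /\
        (n_cols_coincide arr j j' = 3 ->
           [/\ #|loops_between_cols arr j k| = 2,
               #|loops_between_cols arr j' k| = 2
             & #|short_loops arr| = 4]))).
Proof.
move=> /andP[/all3P Hr /all3P Hc]; split.
  move=> i i' hii.
  move/all3P: (Hr i) => /(_ i') /implyP /(_ hii) /and3P [A B /all3P C].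
  rewrite /n_rows_differ /n_rows_coincide !card_pos.
  split; [|split].
  - by move=> h; rewrite -card_gt0 LRcard //; exact: (implyP A h).
  - by move=> h; rewrite LRcard //; apply/eqP; apply: (implyP B); apply/eqP.
  move=> k hki hki'; have hik : i != k by rewrite eq_sym.
  have hi'k : i' != k by rewrite eq_sym.
  move: (C k); rewrite hki hki' /= => /andP[D E]; split.
    move=> h; case/and3P: (implyP D h) => g1 g2 g3.
    by split; rewrite -?card_gt0 ?LRcard ?SLcard.
  move=> h; case/and3P: (implyP E (introT eqP h)) => /eqP g1 /eqP g2 /eqP g3.
  by split; rewrite ?LRcard ?SLcard.
move=> i i' hii.
move/all3P: (Hc i) => /(_ i') /implyP /(_ hii) /and3P [A B /all3P C].
rewrite /n_cols_differ /n_cols_coincide !card_pos.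
split; [|split].
- by move=> h; rewrite -card_gt0 LCcard //; exact: (implyP A h).
- by move=> h; rewrite LCcard //; apply/eqP; apply: (implyP B); apply/eqP.
move=> k hki hki'; have hik : i != k by rewrite eq_sym.
have hi'k : i' != k by rewrite eq_sym.
move: (C k); rewrite hki hki' /= => /andP[D E]; split.
  move=> h; case/and3P: (implyP D h) => g1 g2 g3.
  by split; rewrite -?card_gt0 ?LCcard ?SLcard.
move=> h; case/and3P: (implyP E (introT eqP h)) => /eqP g1 /eqP g2 /eqP g3.
by split; rewrite ?LCcard ?SLcard.
Qed.

Lemma sOfE arr : sOf arr =
  [:: arr (o0, o0) (o0, o1); arr (o0, o0) (o0, o2); arr (o0, o1) (o0, o2);
      arr (o1, o0) (o1, o1); arr (o1, o0) (o1, o2); arr (o1, o1) (o1, o2);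
      arr (o2, o0) (o2, o1); arr (o2, o0) (o2, o2); arr (o2, o1) (o2, o2);
      arr (o0, o0) (o1, o0); arr (o0, o0) (o2, o0); arr (o1, o0) (o2, o0);
      arr (o0, o1) (o1, o1); arr (o0, o1) (o2, o1); arr (o1, o1) (o2, o1);
      arr (o0, o2) (o1, o2); arr (o0, o2) (o2, o2); arr (o1, o2) (o2, o2)].
Proof. reflexivity. Qed.

Lemma rowgood arr i : transition_diagram arr -> cond1 arr ->
  tripgood (arr (i, o0) (i, o1)) (arr (i, o0) (i, o2)) (arr (i, o1) (i, o2)).
Proof.
move=> [t1 t2 _] [c1 _].
have e02 : arr (i, o2) (i, o0) = ~~ arr (i, o0) (i, o2).
  by move: (t2 i o0 o2 isT); case: (arr (i, o2) (i, o0)); case: (arr (i, o0) (i, o2)).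
have e12 : arr (i, o2) (i, o1) = ~~ arr (i, o1) (i, o2).
  by move: (t2 i o1 o2 isT); case: (arr (i, o2) (i, o1)); case: (arr (i, o1) (i, o2)).
have e01 : arr (i, o1) (i, o0) = ~~ arr (i, o0) (i, o1).
  by move: (t2 i o0 o1 isT); case: (arr (i, o1) (i, o0)); case: (arr (i, o0) (i, o1)).
have n1 := c1 i o0 o1 o2; have n2 := c1 i o0 o2 o1.
rewrite e02 in n1; rewrite e12 e01 in n2; move: n1 n2; rewrite /tripgood.
case: (arr (i, o0) (i, o1)); case: (arr (i, o0) (i, o2)); case: (arr (i, o1) (i, o2)).
all: move=> n1 n2; first [by [] | by exfalso; apply: n1 | by exfalso; apply: n2].
Qed.

Lemma colgood arr j : transition_diagram arr -> cond1 arr ->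
  tripgood (arr (o0, j) (o1, j)) (arr (o0, j) (o2, j)) (arr (o1, j) (o2, j)).
Proof.
move=> [t1 t2 _] [_ c1].
have e02 : arr (o2, j) (o0, j) = ~~ arr (o0, j) (o2, j).
  by move: (t1 j o0 o2 isT); case: (arr (o2, j) (o0, j)); case: (arr (o0, j) (o2, j)).
have e12 : arr (o2, j) (o1, j) = ~~ arr (o1, j) (o2, j).
  by move: (t1 j o1 o2 isT); case: (arr (o2, j) (o1, j)); case: (arr (o1, j) (o2, j)).
have e01 : arr (o1, j) (o0, j) = ~~ arr (o0, j) (o1, j).
  by move: (t1 j o0 o1 isT); case: (arr (o1, j) (o0, j)); case: (arr (o0, j) (o1, j)).
have n1 := c1 j o0 o1 o2; have n2 := c1 j o0 o2 o1.
rewrite e02 in n1; rewrite e12 e01 in n2; move: n1 n2; rewrite /tripgood.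
case: (arr (o0, j) (o1, j)); case: (arr (o0, j) (o2, j)); case: (arr (o1, j) (o2, j)).
all: move=> n1 n2; first [by [] | by exfalso; apply: n1 | by exfalso; apply: n2].
Qed.

Theorem mainTheorem5 (arr : rel cell) :
  transition_diagram arr -> cond1 arr -> cond2 arr -> cond3 arr -> cond4 arr ->
  cond5 arr ->
  (* rows *)
  (forall i i' : 'I_3, i != i' ->
     (2 <= n_rows_differ arr i i' -> loops_between_rows arr i i' != set0) /\
     (n_rows_differ arr i i' = 3 -> #|loops_between_rows arr i i'| = 2) /\
     (forall k : 'I_3, k != i -> k != i' ->
        (2 <= n_rows_coincide arr i i' ->
           [/\ loops_between_rows arr i k != set0,
               loops_between_rows arr i' k != set0
             & 2 <= #|short_loops arr|]) /\
        (n_rows_coincide arr i i' = 3 ->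
           [/\ #|loops_between_rows arr i k| = 2,
               #|loops_between_rows arr i' k| = 2
             & #|short_loops arr| = 4]))) /\
  (* columns *)
  (forall j j' : 'I_3, j != j' ->
     (2 <= n_cols_differ arr j j' -> loops_between_cols arr j j' != set0) /\
     (n_cols_differ arr j j' = 3 -> #|loops_between_cols arr j j'| = 2) /\
     (forall k : 'I_3, k != j -> k != j' ->
        (2 <= n_cols_coincide arr j j' ->
           [/\ loops_between_cols arr j k != set0,
               loops_between_cols arr j' k != set0
             & 2 <= #|short_loops arr|]) /\
        (n_cols_coincide arr j j' = 3 ->
           [/\ #|loops_between_cols arr j k| = 2,
               #|loops_between_cols arr j' k| = 2
             & #|short_loops arr| = 4]))).
Proof.
move=> td h1 h2 h3 h4 h5.
have hs : forall k, (k < 18)%N -> nth false (sOf arr) k = arr (cA k) (cB k).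
  by move=> k hk; rewrite /sOf nth_mkseq.
have E : arr = mk (sOf arr).
  apply: functional_extensionality => c; apply: functional_extensionality => d.
  exact: arr_mk.
have T : tripok (sOf arr).
  rewrite sOfE !tripokS !rowgood // !colgood //.
have C := allTP check_all (size_mkseq _ _) T.
have b2 : c2b arr.
  apply/andP; split; apply/all3P => i; apply/all3P => i'; apply/implyP => hne;
    apply/negP => /all3P H.
    exact: (h2.1 i i' hne H).
  exact: (h2.2 i i' hne H).
have b34 : c34b arr.
  apply/andP; split; apply/allCP => c; apply/negP => /allCP H.
    by apply: (h3 c) => d hd; exact: (implyP (H d) hd).
  by apply: (h4 c) => d hd; exact: (implyP (H d) hd).
have b5 : ~~ cycb (altF arr).
  apply/negP => /cycb_cycle [c [p [hp hl hpath]]].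
  exact: ((h5 c p hp hl).1 hpath).
move: C; rewrite /checkS /checkA -E b2 b34 (negbTE b5) concBFE.
exact: concl_of.
Qed.
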